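(* Let $\lambda,\lambda_1,\sigma,\sigma_1\in\mathbb{C}^*$ and $\eta,\eta_1\in\mathbb{C}$. Then: (1) $\Omega(\lambda,\eta,\sigma,0)\cong\Omega(\lambda_1,\eta_1,\sigma_1,0)$ as $\mathcal{G}$-modules if and only if $\lambda=\lambda_1,\eta=\eta_1,\sigma=\sigma_1$; (2) $\Omega(\lambda,\eta,0,\sigma)\cong\Omega(\lambda_1,\eta_1,0,\sigma_1)$ if and only if $\lambda=\lambda_1,\eta=\eta_1,\sigma=\sigma_1$; (3) $\Omega(\lambda,\eta,\sigma,0)$ and $\Omega(\lambda_1,\eta_1,0,\sigma_1)$ are not isomorphic.
   Context: $\mathcal{G}$ is the complex Lie algebra with basis $\{L_n,H_n,I_n,J_n,\mathbf{c}_1,\mathbf{c}_2,\mathbf{c}_3: n\in\mathbb{Z}\}$ whose brackets of basis elements are $[L_m,L_n]=(n-m)L_{m+n}+\frac{m^3-m}{12}\delta_{m+n,0}\mathbf{c}_1$, $[L_m,H_n]=nH_{m+n}+m^2\delta_{m+n,0}\mathbf{c}_2$, $[H_m,H_n]=m\delta_{m+n,0}\mathbf{c}_3$, $[L_m,I_n]=(n-m)I_{m+n}$, $[L_m,J_n]=(n-m)J_{m+n}$, $[H_m,I_n]=I_{m+n}$, $[H_m,J_n]=-J_{m+n}$ (and antisymmetric counterparts), all other brackets of basis elements zero. For $\lambda\in\mathbb{C}^*,\eta\in\mathbb{C}$, $\sigma\in\mathbb{C}^*$: $\Omega(\lambda,\eta,\sigma,0)$ is $\mathbb{C}[X,Y]$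 with $L_mf(X,Y)=\lambda^mf(X,Y-m)(Y-mX+m\eta)$, $H_mf=\lambda^mXf(X,Y-m)$, $I_mf=\lambda^m\sigma f(X-1,Y-m)$, and $J_m,\mathbf{c}_1,\mathbf{c}_2,\mathbf{c}_3$ acting as $0$; $\Omega(\lambda,\eta,0,\sigma)$ is $\mathbb{C}[X,Y]$ with $L_mf=\lambda^mf(X,Y-m)(Y+mX+m\eta)$, $H_mf=\lambda^mXf(X,Y-m)$, $J_mf=\lambda^m\sigma f(X+1,Y-m)$, and $I_m,\mathbf{c}_1,\mathbf{c}_2,\mathbf{c}_3$ acting as $0$ ($m\in\mathbb{Z}$). *)

(* Defs.v *)
From mathcomp Require Import all_boot all_order all_algebra.
From mathcomp.real_closed Require Import complex.
From mathcomp Require Import Rstruct.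
Set Implicit Arguments. Unset Strict Implicit. Unset Printing Implicit Defensive.
Import Order.TTheory GRing.Theory Num.Theory.
Local Open Scope ring_scope.

Notation C := (Rdefinitions.R)[i].

Inductive Gbasis : Type :=
| Lb of int | Hb of int | Ib of int | Jb of int | c1b | c2b | c3b.

(* C[X,Y] is represented as {poly {poly C}}: the outer variable is Y,
   the inner (coefficient) variable is X. *)
Definition CXY := {poly {poly C}}.
Definition varY : CXY := 'X.
Definition varX : CXY := ('X)%:P.
Definition cst (a : C) : CXY := a%:P%:P.

(* shift a b f = f(X - a, Y - b) *)
Definition shift (a b : C) (f : CXY) : CXY :=
  (map_poly (fun c : {poly C} => c \Po ('X - a%:P)) f) \Po ('X - (b%:P)%:P).

(* Omega(lam, eta, sig, 0) : action of basis elements on C[X,Y]. *)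
Definition OmegaI (lam eta sig : C) (b : Gbasis) (f : CXY) : CXY :=
  match b with
  | Lb m => cst (lam ^ m) * shift 0 (m%:~R) f
              * (varY - cst (m%:~R) * varX + cst (m%:~R * eta))
  | Hb m => cst (lam ^ m) * varX * shift 0 (m%:~R) f
  | Ib m => cst (lam ^ m * sig) * shift 1 (m%:~R) f
  | _ => 0
  end.

(* Omega(lam, eta, 0, sig) *)
Definition OmegaJ (lam eta sig : C) (b : Gbasis) (f : CXY) : CXY :=
  match b with
  | Lb m => cst (lam ^ m) * shift 0 (m%:~R) f
              * (varY + cst (m%:~R) * varX + cst (m%:~R * eta))
  | Hb m => cst (lam ^ m) * varX * shift 0 (m%:~R) f
  | Jb m => cst (lam ^ m * sig) * shift (-1) (m%:~R) f
  | _ => 0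
  end.

(* Two G-module structures on C[X,Y] (given by the action of basis elements,
   extended linearly) are isomorphic iff there is a C-linear bijection
   intertwining the action of every basis element. *)
Definition Gmod_iso (rho1 rho2 : Gbasis -> CXY -> CXY) : Prop :=
  exists phi : CXY -> CXY,
    [/\ (forall (a : C) (f g : CXY), phi (cst a * f + g) = cst a * phi f + phi g),
        bijective phi &
        forall (b : Gbasis) (f : CXY), phi (rho1 b f) = rho2 b (phi f)].

(* Main.v *)
From mathcomp Require Import ring.
Require Import Defs.
From mathcomp Require Import all_boot all_order all_algebra.
From mathcomp.real_closed Require Import complex.
From mathcomp Require Import Rstruct.
Import Order.TTheory GRing.Theory Num.Theory.
Local Open Scope ring_scope.

Lemma shiftC a b d : shift a b (cst d) = cst d.
Proof. by rewrite /shift /cst map_polyC /= !comp_polyC. Qed.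
Lemma shift1 a b : shift a b 1 = 1.
Proof. by have := shiftC a b 1; rewrite /cst !polyC1. Qed.
Lemma shift00 f : shift 0 0 f = f.
Proof.
rewrite /shift.
have e0 : (0 : C)%:P = 0 := polyC0 _.
have e1 : (0 : {poly C})%:P = 0 := polyC0 _.
rewrite e0 e1 !subr0 comp_polyXr map_poly_id // => c _.
by rewrite comp_polyXr.
Qed.
Lemma int0 : ((0:int)%:~R : C) = 0. Proof. by []. Qed.
Lemma int1 : ((1:int)%:~R : C) = 1. Proof. by []. Qed.
Lemma e0 (l : C) : l ^ (0:int) = 1. Proof. by []. Qed.
Lemma e1 (l : C) : l ^ (1:int) = l. Proof. by rewrite expr1z. Qed.

Lemma cst1 : cst 1 = 1. Proof. by rewrite /cst !polyC1. Qed.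

Lemma scalar_iso (rho1 rho2 : Gbasis -> CXY -> CXY) phi :
  (forall f, rho1 (Hb 0) f = varX * f) -> (forall f, rho1 (Lb 0) f = f * varY) ->
  (forall f, rho2 (Hb 0) f = varX * f) -> (forall f, rho2 (Lb 0) f = f * varY) ->
  (forall (a : C) (f g : CXY), phi (cst a * f + g) = cst a * phi f + phi g) ->
  bijective phi ->
  (forall (b : Gbasis) (f : CXY), phi (rho1 b f) = rho2 b (phi f)) ->
  exists d : C, d != 0 /\ forall f, phi f = f * cst d.
Proof.
move=> H1 L1 H2 L2 lin [g phig gphi] int.
have phi0 : phi 0 = 0.
  have := lin 1 0 0; rewrite mulr0 addr0 cst1 mul1r => h.
  by apply: (addrI (phi 0)); rewrite addr0 -h.
have phiZ a f : phi (cst a * f) = cst a * phi f by rewrite -[_ * f]addr0 lin phi0 addr0.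
have phiD f h : phi (f + h) = phi f + phi h by have := lin 1 f h; rewrite cst1 !mul1r.
have phiX f : phi (varX * f) = varX * phi f by rewrite -H1 int H2.
have phiY f : phi (f * varY) = phi f * varY by rewrite -L1 int L2.
set p := phi 1.
have phiC c : phi c%:P = c%:P * p.
  elim/poly_ind: c => [|c a IH]; first by rewrite polyC0 phi0 mul0r.
  have -> : (c * 'X + a%:P)%:P = varX * c%:P + cst a * 1.
    by rewrite /varX /cst mulr1 polyCD polyCM mulrC.
  by rewrite phiD phiX phiZ IH -/p; ring.
have phiM f : phi f = f * p.
  elim/poly_ind: f => [|f c IH]; first by rewrite phi0 mul0r.
  by rewrite phiD phiC -/varY phiY IH /varY; ring.
have up : p \in GRing.unit.
  have e : g 1 * p = 1 by have := phiM (g 1); rewrite gphi => /esym.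
  by apply/unitrP; exists (g 1); split; last rewrite mulrC.
move: up; rewrite poly_unitE => /andP [sp u0].
move: u0; rewrite poly_unitE => /andP [sq u1].
exists (p`_0)`_0; split; first by rewrite -unitfE.
move=> f; rewrite phiM /cst -(size1_polyC (eq_leq (eqP sq))).
by rewrite -(size1_polyC (eq_leq (eqP sp))).
Qed.

Lemma cst0 : cst 0 = 0. Proof. by rewrite /cst !polyC0. Qed.

Lemma OI_H lam eta sig f : OmegaI lam eta sig (Hb 0) f = varX * f.
Proof. by rewrite /OmegaI (e0 lam) int0 shift00 cst1 mul1r. Qed.
Lemma OI_L lam eta sig f : OmegaI lam eta sig (Lb 0) f = f * varY.
Proof. rewrite /OmegaI (e0 lam) int0 shift00 cst1 (mul0r eta) cst0; ring. Qed.
Lemma OJ_H lam eta sig f : OmegaJ lam eta sig (Hb 0) f = varX * f.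
Proof. by rewrite /OmegaJ (e0 lam) int0 shift00 cst1 mul1r. Qed.
Lemma OJ_L lam eta sig f : OmegaJ lam eta sig (Lb 0) f = f * varY.
Proof. rewrite /OmegaJ (e0 lam) int0 shift00 cst1 (mul0r eta) cst0; ring. Qed.

Lemma iso_refl rho : Gmod_iso rho rho.
Proof. exists id; split=> //; exact: (Bijective (g:=id)). Qed.

Theorem corollary4p4 (lam lam1 sig sig1 eta eta1 : C) :
  lam != 0 -> lam1 != 0 -> sig != 0 -> sig1 != 0 ->
  [/\ (Gmod_iso (OmegaI lam eta sig) (OmegaI lam1 eta1 sig1) <->
         [/\ lam = lam1, eta = eta1 & sig = sig1]),
      (Gmod_iso (OmegaJ lam eta sig) (OmegaJ lam1 eta1 sig1) <->
         [/\ lam = lam1, eta = eta1 & sig = sig1]) &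
      ~ Gmod_iso (OmegaI lam eta sig) (OmegaJ lam1 eta1 sig1)].
Proof.
move=> l0 l10 s0 s10; split.
- split; last by case=> <- <- <-; exact: iso_refl.
  case=> phi [lin bij int].
  have [d [d0 Hd]] := @scalar_iso _ _ phi (@OI_H lam eta sig) (@OI_L lam eta sig) (@OI_H lam1 eta1 sig1) (@OI_L lam1 eta1 sig1) lin bij int.
  have p1 : phi 1 = cst d by rewrite Hd mul1r.
  have eH := int (Hb 1) 1; rewrite p1 Hd /OmegaI !shiftC !e1 in eH.
  move/(congr1 (fun z => (z.[0]).[1])): eH; rewrite !(hornerD, hornerN, hornerM, hornerC, hornerX) => eH.
  have el : lam = lam1 by apply: (mulIf d0); ring: eH.
  have eI := int (Ib 0) 1; rewrite p1 Hd /OmegaI !shiftC !e0 in eI.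
  move/(congr1 (fun z => (z.[0]).[1])): eI; rewrite !(hornerD, hornerN, hornerM, hornerC, hornerX) => eI.
  have es : sig = sig1 by apply: (mulIf d0); ring: eI.
  have eL := int (Lb 1) 1; rewrite p1 Hd /OmegaI !shiftC !e1 int1 in eL.
  move/(congr1 (fun z => (z.[0]).[0])): eL; rewrite !(hornerD, hornerN, hornerM, hornerC, hornerX) => eL.
  split=> //; apply: (mulfI (mulf_neq0 l0 d0)); rewrite -el in eL; ring: eL.
- split; last by case=> <- <- <-; exact: iso_refl.
  case=> phi [lin bij int].
  have [d [d0 Hd]] := @scalar_iso _ _ phi (@OJ_H lam eta sig) (@OJ_L lam eta sig) (@OJ_H lam1 eta1 sig1) (@OJ_L lam1 eta1 sig1) lin bij int.
  have p1 : phi 1 = cst d by rewrite Hd mul1r.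
  have eH := int (Hb 1) 1; rewrite p1 Hd /OmegaJ !shiftC !e1 in eH.
  move/(congr1 (fun z => (z.[0]).[1])): eH; rewrite !(hornerD, hornerN, hornerM, hornerC, hornerX) => eH.
  have el : lam = lam1 by apply: (mulIf d0); ring: eH.
  have eI := int (Jb 0) 1; rewrite p1 Hd /OmegaJ !shiftC !e0 in eI.
  move/(congr1 (fun z => (z.[0]).[1])): eI; rewrite !(hornerD, hornerN, hornerM, hornerC, hornerX) => eI.
  have es : sig = sig1 by apply: (mulIf d0); ring: eI.
  have eL := int (Lb 1) 1; rewrite p1 Hd /OmegaJ !shiftC !e1 int1 in eL.
  move/(congr1 (fun z => (z.[0]).[0])): eL; rewrite !(hornerD, hornerN, hornerM, hornerC, hornerX) => eL.
  split=> //; apply: (mulfI (mulf_neq0 l0 d0)); rewrite -el in eL; ring: eL.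
- case=> phi [lin bij int].
  have [d [d0 Hd]] := @scalar_iso _ _ phi (@OI_H lam eta sig) (@OI_L lam eta sig) (@OJ_H lam1 eta1 sig1) (@OJ_L lam1 eta1 sig1) lin bij int.
  have p1 : phi 1 = cst d by rewrite Hd mul1r.
  have eI := int (Ib 0) 1; rewrite p1 Hd /OmegaI /OmegaJ !shiftC !e0 in eI.
  move/(congr1 (fun z => (z.[0]).[1])): eI; rewrite !(hornerD, hornerN, hornerM, hornerC, hornerX) => eI.
  have : sig * d = 0 by ring: eI.
  by apply/eqP; rewrite mulf_neq0.
Qed.
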